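(* For all $t,n>0$ and every non-decreasing positive function $f$, there exists $T$ such that the following holds. Let $Z$ and $U$ be sets of points of a metric space with metric $d$ such that $|Z|\le n$ and for every $u\in U$ there exists $z\in Z$ with $d(u,z)<t$. Then there exist a subset $Z'\subseteq Z$ and a number $t'\le T$ such that \begin{itemize} \item for every $u\in U$ there exists $z\in Z'$ with $d(u,z)<t'$, and \item for distinct $z_1,z_2\in Z'$, $d(z_1,z_2)\ge f(t')$. \end{itemize} Furthermore, if $Z''\subseteq Z$ is a set whose elements are pairwise at distance at least $T$, then $Z'$ can be chosen so that $Z''\subseteq Z'$. *)

(* Defs.v *)
From Stdlib Require Import Reals List.
Open Scope R_scope.

Definition is_metric {X : Type} (d : X -> X -> R) : Prop :=
  (forall x y, 0 <= d x y) /\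
  (forall x y, d x y = 0 <-> x = y) /\
  (forall x y, d x y = d y x) /\
  (forall x y z, d x z <= d x y + d y z).

Definition card_le {X : Type} (S : X -> Prop) (n : nat) : Prop :=
  exists l : list X, NoDup l /\ (length l <= n)%nat /\ (forall x, S x <-> In x l).

Definition subset {X : Type} (A B : X -> Prop) : Prop := forall x, A x -> B x.

Definition covers {X : Type} (d : X -> X -> R) (Z U : X -> Prop) (r : R) : Prop :=
  forall u, U u -> exists z, Z z /\ d u z < r.

Definition separated {X : Type} (d : X -> X -> R) (S : X -> Prop) (r : R) : Prop :=
  forall z1 z2, S z1 -> S z2 -> z1 <> z2 -> r <= d z1 z2.

(* Main.v *)
Require Import Defs.
From Stdlib Require Import Reals Lra Lia List Classical.
Open Scope R_scope.

Fixpoint sq (f : R -> R) (t : R) (k : nat) : R :=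
  match k with O => t | S k' => sq f t k' + f (sq f t k') end.

Lemma sq_pos f t : 0 < t -> (forall x, 0 < x -> 0 < f x) -> forall k, 0 < sq f t k.
Proof. intros Ht Hf; induction k; simpl; [lra|]. specialize (Hf _ IHk); lra. Qed.

Lemma sq_mono f t : 0 < t -> (forall x, 0 < x -> 0 < f x) ->
  forall k j, (k <= j)%nat -> sq f t k <= sq f t j.
Proof.
  intros Ht Hf k j H; induction H; [lra|]. simpl.
  pose proof (Hf _ (sq_pos f t Ht Hf m)); lra.
Qed.

Lemma remove_ex {X : Type} (l : list X) (z : X) : NoDup l -> In z l ->
  exists l', NoDup l' /\ length l = S (length l') /\
    (forall x, In x l' <-> In x l /\ x <> z).
Proof.
  intros Hn Hi. destruct (in_split _ _ Hi) as [l1 [l2 E]]. subst l.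
  exists (l1 ++ l2). split; [eapply NoDup_remove_1; eauto|].
  split; [rewrite !length_app; simpl; lia|].
  pose proof (NoDup_remove_2 _ _ _ Hn) as Hz. rewrite in_app_iff in Hz.
  intros x; rewrite !in_app_iff; simpl; split.
  - intros H; split; [tauto|]. intros ->; tauto.
  - intros [H1 H2]; destruct H1 as [H1|[H1|H1]]; auto; congruence.
Qed.

Lemma step (t : R) (n : nat) (f : R -> R) :
  0 < t -> (forall x, 0 < x -> 0 < f x) ->
  forall (X : Type) (d : X -> X -> R) (Z'' U : X -> Prop), is_metric d ->
  separated d Z'' (sq f t n) ->
  forall m k (l : list X), length l = m -> (k + m <= n)%nat -> NoDup l ->
  subset Z'' (fun x => In x l) -> covers d (fun x => In x l) U (sq f t k) ->
  exists (Z' : X -> Prop) (t' : R),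
     subset Z' (fun x => In x l) /\ subset Z'' Z' /\ 0 < t' /\ t' <= sq f t n /\
     covers d Z' U t' /\ separated d Z' (f t').
Proof.
  intros Ht Hf X d Z'' U Hd HZ''. destruct Hd as [Hd0 [Hd1 [Hds Hdt]]].
  induction m as [|m IH]; intros k l Hl Hkn Hnd Hsub Hcov.
  - exists (fun x => In x l), (sq f t k). repeat split.
    + intros x H; exact H.
    + exact Hsub.
    + apply sq_pos; auto.
    + apply sq_mono; auto; lia.
    + exact Hcov.
    + intros z1 z2 H1; destruct l; [destruct H1|simpl in Hl; lia].
  - destruct (classic (separated d (fun x => In x l) (f (sq f t k)))) as [Hs|Hs].
    + exists (fun x => In x l), (sq f t k). repeat split.
      * intros x H; exact H.
      * exact Hsub.
      * apply sq_pos; auto.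
      * apply sq_mono; auto; lia.
      * exact Hcov.
      * exact Hs.
    + assert (Hex : exists a b, In a l /\ In b l /\ a <> b /\ d a b < f (sq f t k)).
      { apply NNPP; intro Hn; apply Hs; intros z1 z2 H1 H2 H3.
        destruct (Rle_dec (f (sq f t k)) (d z1 z2)) as [r|r]; auto.
        exfalso; apply Hn; exists z1, z2; repeat split; auto; lra. }
      destruct Hex as [a [b [Ha [Hb [Hab Hdab]]]]].
      assert (Hk1 : (k + 1 <= n)%nat).
      { destruct l as [|x0 l0]; [destruct Ha|]. destruct l0 as [|x1 l1].
        - simpl in Ha, Hb. destruct Ha as [Ha|[]]; destruct Hb as [Hb|[]]; congruence.
        - simpl in Hl; lia. }
      assert (HfT : f (sq f t k) <= sq f t n).
      { pose proof (sq_mono f t Ht Hf (S k) n ltac:(lia)). simpl in H.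
        pose proof (sq_pos f t Ht Hf k); lra. }
      assert (Hex2 : exists a b, In a l /\ In b l /\ a <> b /\ d a b < f (sq f t k) /\ ~ Z'' b).
      { destruct (classic (Z'' b)) as [Zb|Zb].
        - destruct (classic (Z'' a)) as [Za|Za].
          + exfalso. specialize (HZ'' a b Za Zb Hab). lra.
          + exists b, a; repeat split; auto. rewrite Hds; auto.
        - exists a, b; repeat split; auto. }
      clear a b Ha Hb Hab Hdab. destruct Hex2 as [a [b [Ha [Hb [Hab [Hdab HZb]]]]]].
      destruct (remove_ex l b Hnd Hb) as [l' [Hnd' [Hlen Hin]]].
      destruct (IH (S k) l') as [Z' [t' [H1 [H2 [H3 [H4 [H5 H6]]]]]]].
      * lia.
      * lia.
      * exact Hnd'.
      * intros x Hx; apply Hin; split; [apply Hsub; auto|]. intros ->; auto.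
      * intros u Hu. destruct (Hcov u Hu) as [z [Hz Hdz]].
        pose proof (Hf _ (sq_pos f t Ht Hf k)).
        destruct (classic (z = b)) as [->|Hzb].
        -- exists a; split; [apply Hin; split; auto|].
           simpl. pose proof (Hdt u b a) as Ht3. rewrite (Hds b a) in Ht3. lra.
        -- exists z; split; [apply Hin; split; auto|]. simpl; lra.
      * exists Z', t'; repeat split; auto.
        intros x Hx; apply (proj1 (Hin x)); auto.
Qed.

Theorem lemma18 :
  forall (t : R) (n : nat) (f : R -> R),
    0 < t -> (0 < n)%nat ->
    (forall x y, 0 < x -> x <= y -> f x <= f y) ->
    (forall x, 0 < x -> 0 < f x) ->
    exists T : R,
      forall (X : Type) (d : X -> X -> R) (Z U : X -> Prop),
        is_metric d -> card_le Z n -> covers d Z U t ->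
        (exists (Z' : X -> Prop) (t' : R),
            subset Z' Z /\ 0 < t' /\ t' <= T /\
            covers d Z' U t' /\ separated d Z' (f t')) /\
        (forall Z'' : X -> Prop, subset Z'' Z -> separated d Z'' T ->
          exists (Z' : X -> Prop) (t' : R),
            subset Z' Z /\ subset Z'' Z' /\ 0 < t' /\ t' <= T /\
            covers d Z' U t' /\ separated d Z' (f t')).
Proof.
  intros t n f Ht Hn Hmon Hf. exists (sq f t n).
  intros X d Z U Hd [l [Hnd [Hlen HZl]]] Hcov.
  assert (Hcov' : covers d (fun x => In x l) U (sq f t 0)).
  { intros u Hu; destruct (Hcov u Hu) as [z [Hz Hdz]]; exists z; split; auto; apply HZl; auto. }
  assert (Main : forall Z'' : X -> Prop, subset Z'' Z -> separated d Z'' (sq f t n) ->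
          exists (Z' : X -> Prop) (t' : R),
            subset Z' Z /\ subset Z'' Z' /\ 0 < t' /\ t' <= sq f t n /\
            covers d Z' U t' /\ separated d Z' (f t')).
  { intros Z'' Hs Hsep.
    destruct (step t n f Ht Hf X d Z'' U Hd Hsep (length l) 0 l eq_refl ltac:(lia) Hnd)
      as [Z' [t' [H1 [H2 [H3 [H4 [H5 H6]]]]]]]; auto.
    - intros x Hx; apply HZl; auto.
    - exists Z', t'; repeat split; auto. intros x Hx; apply HZl; auto. }
  split; [|exact Main].
  destruct (Main (fun _ => False)) as [Z' [t' [H1 [H2 [H3 [H4 [H5 H6]]]]]]].
  - intros x [].
  - intros z1 z2 [].
  - exists Z', t'; repeat split; auto.
Qed.
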